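(* Let $i\geq 2$ be an integer and let $D$ be a strong digraph with $D\in\mathcal{LE}_i$. Then $D$ has an independent set of vertices that meets (shares a vertex with) every longest directed path of $D$.
   Context: All digraphs are finite, without loops or multiple arcs. Paths and cycles are directed; the length of a path or cycle is its number of arcs. A set of vertices is independent if no two distinct vertices of it are joined by an arc. A digraph is strong if for every ordered pair of vertices $x,y$ there is a directed path from $x$ to $y$. For a subdigraph $H$ of a digraph $D$, an ear of $H$ in $D$ is either a directed path in $D$ whose two end vertices lie in $H$ and whose internal vertices do not lie in $H$, or a directed cycle in $D$ having exactly one vertex in $H$. An ear decomposition of a strong digraph $D$ is a sequence $(D_0,D_1,\ldots,D_k)$ of strong subdigraphs of $D$ such that $D_0$ is a directed cycle, $D_{j+1}=D_j\cup P_j$ where $P_j$ is an ear of $D_j$ in $D$ for every $j\in\{0,\ldots,k-1\}$, and $D_k=D$. For an integer $i\geq 1$, $\mathcal{LE}_i$ denotes the family of strong digraphs having an ear decomposition in which every ear has length at least $i$. *)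

(* Defs.v *)
(* A digraph is a finite vertex type V with an arc relation
   A : rel V (no multiple arcs by construction; looplessness is a hypothesis). *)
From mathcomp Require Import all_boot.
Set Implicit Arguments. Unset Strict Implicit. Unset Printing Implicit Defensive.

Section Digraphs.
Variables (V : finType) (A : rel V).

Definition dpath (p : seq V) : bool :=
  if p is x :: q then path A x q && uniq p else false.

Definition path_len (p : seq V) : nat := (size p).-1.

Definition dcycle (c : seq V) : bool := [&& 1 < size c, uniq c & cycle A c].

Definition path_arcs (p : seq V) : seq (V * V) := zip p (behead p).
Definition cycle_arcs (c : seq V) : seq (V * V) := zip c (rot 1 c).

Definition longest_path (p : seq V) : Prop :=
  dpath p /\ forall q, dpath q -> path_len q <= path_len p.

Definition independent (S : {set V}) : Prop :=
  forall x y, x \in S -> y \in S -> x != y -> ~~ A x y.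

Definition strong : Prop := forall x y : V, connect A x y.

Definition subg := ({set V} * {set V * V})%type.

Definition strong_sub (H : subg) : Prop :=
  forall x y, x \in H.1 -> y \in H.1 ->
    connect (fun u v => (u, v) \in H.2) x y.

Definition full : subg := ([set: V], [set a : V * V | A a.1 a.2]).

Inductive ear := PathEar of seq V | CycleEar of seq V.

Definition ear_len (e : ear) : nat :=
  match e with PathEar p => path_len p | CycleEar c => size c end.

Definition is_ear (H : subg) (e : ear) : Prop :=
  match e with
  | PathEar p =>
      (* p = x :: q, end vertices x and last x q, internal vertices
         behead (belast x q) *)
      if p is x :: q then
        [/\ dpath p, q != [::], x \in H.1, last x q \in H.1 &
            forall y, y \in behead (belast x q) -> y \notin H.1]
      else False
  | CycleEar c => dcycle c /\ #|[set x in c] :&: H.1| = 1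
  end.

Definition ear_verts (e : ear) : seq V :=
  match e with PathEar p => p | CycleEar c => c end.
Definition ear_arcs (e : ear) : seq (V * V) :=
  match e with PathEar p => path_arcs p | CycleEar c => cycle_arcs c end.

Definition add_ear (H : subg) (e : ear) : subg :=
  (H.1 :|: [set x in ear_verts e], H.2 :|: [set a in ear_arcs e]).

Definition cycle_sub (c : seq V) : subg :=
  ([set x in c], [set a in cycle_arcs c]).

(* (D_j, P_j, ..., P_{k-1}) continues an ear decomposition from D_j,
   with all ears of length >= i, every D_{j+1} strong, and D_k = D. *)
Fixpoint ear_seq (i : nat) (H : subg) (es : seq ear) : Prop :=
  match es with
  | [::] => H = full
  | e :: es' => [/\ is_ear H e, i <= ear_len e, strong_sub (add_ear H e)
                   & ear_seq i (add_ear H e) es']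
  end.

Definition LE (i : nat) : Prop :=
  exists (c0 : seq V) (es : seq ear),
    [/\ dcycle c0, strong_sub (cycle_sub c0) & ear_seq i (cycle_sub c0) es].

End Digraphs.

(* Main.v *)
Require Import Defs.
From mathcomp Require Import all_boot zify.
Set Implicit Arguments. Unset Strict Implicit. Unset Printing Implicit Defensive.

Lemma zip_take' {S T : Type} k (s : seq S) (t : seq T) :
  zip (take k s) (take k t) = take k (zip s t).
Proof. by elim: k s t => [|k IH] [|a s] [|b t] //=; rewrite IH. Qed.

Lemma zip_drop' {S T : Type} k (s : seq S) (t : seq T) :
  zip (drop k s) (drop k t) = drop k (zip s t).
Proof.
have zn : forall u : seq S, zip u ([::] : seq T) = [::] by case.
elim: k s t => [|k IH] [|a s] [|b t] //=; rewrite ?zn ?IH //.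
all: by case: (drop _ _).
Qed.

Lemma zip_rot' {S T : Type} k (s : seq S) (t : seq T) : size s = size t ->
  zip (rot k s) (rot k t) = rot k (zip s t).
Proof.
move=> Hst; rewrite /rot zip_cat; last by rewrite !size_drop Hst.
by rewrite zip_take' zip_drop'.
Qed.

Lemma zip_rcons_l {S T : Type} (s : seq S) (t : seq T) x : size s = size t ->
  zip (rcons s x) t = zip s t.
Proof. by elim: s t => [|a s IH] [|b t] //= [] /IH ->. Qed.

Lemma zip_catr_sub {T : eqType} (s t u : seq T) a :
  a \in zip s t -> a \in zip s (t ++ u).
Proof.
elim: s t => [|x s IH] [|y t] //=; rewrite !in_cons => /orP [->//|/IH ->].
by rewrite orbT.
Qed.

Lemma path_zip_self {T : eqType} (x : T) q :
  path (fun u v => (u, v) \in zip (x :: q) q) x q.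
Proof.
elim: q x => [|y q IH] x //=; rewrite in_cons eqxx /=.
apply: sub_path (IH y) => u v /=; case: q {IH} => [|z q] //= H.
by rewrite in_cons H orbT.
Qed.

Lemma zip_behead_nth {T : eqType} (x0 : T) (s : seq T) u v :
  (u, v) \in zip s (behead s) ->
  exists2 j, j.+1 < size s & (u = nth x0 s j) /\ (v = nth x0 s j.+1).
Proof.
elim: s => [|a s IH] //=.
case: s IH => [|b s] IH //=.
rewrite in_cons => /orP [/eqP [-> ->]|H]; first by exists 0.
by case: (IH H) => j Hj Huv; exists j.+1.
Qed.

Lemma nth_zip_behead {T : eqType} (x0 : T) (s : seq T) j :
  j.+1 < size s -> (nth x0 s j, nth x0 s j.+1) \in zip s (behead s).
Proof.
elim: s j => [|a s IH] j //=.
case: s IH => [|b s] IH //= Hj.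
case: j Hj => [|j] Hj; first by rewrite in_cons eqxx.
by rewrite in_cons (IH j Hj) orbT.
Qed.

Lemma path_pred_in {T : eqType} (e : rel T) x s z : path e x s -> z \in s ->
  exists2 u, u \in x :: s & e u z.
Proof.
elim: s x => [|a s IH] x //= /andP [Hxa Hp]; rewrite in_cons => /orP [/eqP ->|Hz].
  by exists x; rewrite ?mem_head.
by case: (IH a Hp Hz) => u Hu Huz; exists u => //; rewrite in_cons Hu orbT.
Qed.

Lemma path_succ_in {T : eqType} (e : rel T) x s z : path e x s -> z \in x :: s ->
  z != last x s -> exists2 v, v \in s & e z v.
Proof.
elim: s x => [|a s IH] x /=; first by rewrite in_cons orbF => _ /eqP ->; rewrite eqxx.
move=> /andP [Hxa Hp]; rewrite in_cons => /orP [/eqP ->|Hz] Hl.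
  by exists a; rewrite ?mem_head.
by case: (IH a Hp Hz Hl) => v Hv Hzv; exists v => //; rewrite in_cons Hv orbT.
Qed.

Definition hrel {V : finType} (H : subg V) : rel V := fun u v => (u, v) \in H.2.
Definition hpath {V : finType} (H : subg V) (p : seq V) : bool :=
  if p is x :: q then [&& path (hrel H) x q, uniq p & all (fun z => z \in H.1) p]
  else false.
Definition hlongest {V : finType} (H : subg V) p :=
  hpath H p /\ forall q, hpath H q -> path_len q <= path_len p.
Definition wf {V : finType} (H : subg V) :=
  forall u v, (u, v) \in H.2 -> (u \in H.1) && (v \in H.1).
Definition Good {V : finType} (H : subg V) := exists S : {set V},
  [/\ S \subset H.1,
   (forall x y, x \in S -> y \in S -> x != y -> ~~ hrel H x y) &
   forall p, hlongest H p -> exists2 x, x \in p & x \in S].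

Lemma longest_pred {V : finType} (H : subg V) p z u :
  hlongest H p -> z \in p -> (u, z) \in H.2 -> u \in H.1 ->
  (forall u', (u', z) \in H.2 -> u' = u) -> u \in p.
Proof.
case: p => [|x q] [Hp Hmax] // Hz Huz Hu Huniq.
case: (boolP (u \in x :: q)) => // Hnu.
move: Hp => /= /and3P [Hpa Hun Hall].
rewrite in_cons in Hz; case/orP: Hz => [/eqP Hzx|Hzq].
- subst z.
  have : hpath H [:: u, x & q] by rewrite /= {1}/hrel Huz Hpa -/(x :: q) Hnu Hun Hu Hall.
  by move/Hmax; rewrite /path_len /= ltnn.
- have [u' Hu' Hu'z] := path_pred_in Hpa Hzq.
  by rewrite -(Huniq u' Hu'z) Hu' in Hnu.
Qed.

Lemma longest_succ {V : finType} (H : subg V) p z v :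
  hlongest H p -> z \in p -> (z, v) \in H.2 -> v \in H.1 ->
  (forall v', (z, v') \in H.2 -> v' = v) -> v \in p.
Proof.
case: p => [|x q] [Hp Hmax] // Hz Hzv Hv Huniq.
case: (boolP (v \in x :: q)) => // Hnv.
move: Hp => /= /and3P [Hpa Hun Hall].
case: (boolP (z == last x q)) => [/eqP Hzl|Hzl].
- subst z.
  have : hpath H (x :: rcons q v).
    have Hu2 : uniq (rcons (x :: q) v) by rewrite rcons_uniq Hnv /= Hun.
    have Ha2 : all (fun z => z \in H.1) (rcons (x :: q) v) by rewrite all_rcons Hv /= Hall.
    apply/and3P; split => //; by rewrite rcons_path Hpa /hrel Hzv.
  by move/Hmax; rewrite /path_len /= size_rcons ltnn.
- have [v' Hv' Hzv'] := path_succ_in Hpa Hz Hzl.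
  by rewrite -(Huniq v' Hzv') in_cons Hv' orbT in Hnv.
Qed.

Lemma hpath_mono {V : finType} (H H' : subg V) p :
  {subset H.1 <= H'.1} -> {subset H.2 <= H'.2} -> hpath H p -> hpath H' p.
Proof.
move=> s1 s2; case: p => [|x q] // /and3P [Hp Hu Ha].
apply/and3P; split => //.
  by apply: (sub_path _ Hp) => a b; apply: s2.
by apply: (sub_all _ Ha) => z; apply: s1.
Qed.

Lemma ear_step {V : finType} (H H' : subg V) (x0 xl : V) (I : seq V) :
  wf H -> x0 \in H.1 -> xl \in H.1 -> (forall z, z \in I -> z \notin H.1) ->
  uniq I -> I != [::] ->
  (forall z, (z \in H'.1) = (z \in H.1) || (z \in I)) ->
  (forall a, (a \in H'.2) = (a \in H.2) || (a \in zip (x0 :: rcons I xl) (rcons I xl))) ->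
  wf H' /\ (Good H -> Good H').
Proof.
move=> HwfH Hx0 Hxl HI HuI HI0 HV' HE'.
pose w := x0 :: rcons I xl.
pose n := size I.
have Hn0 : 0 < n by rewrite /n; case: (I) HI0.
have Hsw : size w = n.+2 by rewrite /w /= size_rcons.
have nwI : forall k, k < n -> nth x0 w k.+1 = nth x0 I k.
  by move=> k Hk; rewrite /= nth_rcons Hk.
have nwl : nth x0 w n.+1 = xl by rewrite /= nth_rcons ltnn eqxx.
have sub1 : {subset H.1 <= H'.1} by move=> z Hz; rewrite HV' Hz.
have sub2 : {subset H.2 <= H'.2} by move=> a Ha; rewrite HE' Ha.
have IV' : forall z, z \in I -> z \in H'.1 by move=> z Hz; rewrite HV' Hz orbT.
have wV' : forall z, z \in w -> z \in H'.1.
  move=> z; rewrite /w in_cons mem_rcons in_cons => /or3P [/eqP->|/eqP->|/IV' //].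
  - exact: sub1.
  - exact: sub1.
have wV'' : forall k, k < n.+2 -> nth x0 w k \in H'.1.
  by move=> k Hk; apply: wV'; apply: mem_nth; rewrite Hsw.
have Hzip : forall u v, (u, v) \in zip (x0 :: rcons I xl) (rcons I xl) ->
    exists2 j, j < n.+1 & (u = nth x0 w j) /\ (v = nth x0 w j.+1).
  move=> u v /(zip_behead_nth x0) [j Hj Huv]; exists j => //.
  by rewrite -ltnS -Hsw.
have inH : forall j, j < n.+2 -> nth x0 w j \in H.1 -> (j == 0) || (j == n.+1).
  move=> [|j] // Hj; case: (ltnP j n) => Hjn.
    rewrite nwI // => Hin; by move: (HI _ (mem_nth x0 Hjn)); rewrite Hin.
  move=> _; apply/orP; right; apply/eqP; lia.
have noarcH : forall a b, (a, b) \in zip (x0 :: rcons I xl) (rcons I xl) ->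
    a \in H.1 -> b \in H.1 -> False.
  move=> a b /Hzip [j Hj [-> ->]] Ha Hb.
  move: (inH j (ltnW Hj) Ha) (inH j.+1 Hj Hb) => /orP [/eqP Hj0|/eqP Hj0] /orP [/eqP Hj1|/eqP Hj1]; lia.
have predU : forall k, k < n -> forall u, (u, nth x0 I k) \in H'.2 -> u = nth x0 w k.
  move=> k Hk u; rewrite HE' => /orP [/HwfH /andP [_ Hin]|/Hzip [j Hj [-> Hv]]].
    by move: (HI _ (mem_nth x0 Hk)); rewrite Hin.
  case: (ltnP j n) => Hjn.
    move: Hv; rewrite nwI // => /eqP; rewrite nth_uniq // => /eqP ->; done.
  have Ejn : j = n by lia.
  by move: (HI _ (mem_nth x0 Hk)); rewrite Hv Ejn nwl Hxl.
have succU : forall k, k < n -> forall v, (nth x0 I k, v) \in H'.2 -> v = nth x0 w k.+2.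
  move=> k Hk v; rewrite HE' => /orP [/HwfH /andP [Hin _]|/Hzip [j Hj [Hu ->]]].
    by move: (HI _ (mem_nth x0 Hk)); rewrite Hin.
  case: j Hj Hu => [|j] Hj Hu.
    by move: (HI _ (mem_nth x0 Hk)); rewrite Hu Hx0.
  have Hjn : j < n by lia.
  move: Hu; rewrite nwI // => /eqP; rewrite nth_uniq // => /eqP ->; done.
have arcw : forall k, k < n.+1 -> (nth x0 w k, nth x0 w k.+1) \in H'.2.
  move=> k Hk; rewrite HE'; apply/orP; right.
  by apply: (nth_zip_behead x0 (s := w)); rewrite Hsw.
have arcI : forall k, k < n -> (nth x0 w k, nth x0 I k) \in H'.2.
  by move=> k Hk; rewrite -nwI //; apply: arcw; lia.
have arcI' : forall k, k < n -> (nth x0 I k, nth x0 w k.+2) \in H'.2.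
  by move=> k Hk; rewrite -nwI //; apply: arcw; lia.
have key : forall p, hlongest H' p ->
    hlongest H p \/ [/\ x0 \in p, nth x0 I 0 \in p & xl \in p].
  move=> p Hp; case: (boolP (all (fun z => z \in H.1) p)) => Hall.
    left; split.
      case: p Hp Hall => [|x q] [Hp _] // Hall.
      move: Hp => /and3P [Hpa Hu _]; apply/and3P; split => //.
      apply: (sub_in_path (P := fun z => z \in H.1) _ Hall Hpa).
      move=> a b Ha Hb; rewrite /hrel HE' => /orP [//|/noarcH Hab].
      by case: (Hab Ha Hb).
    by move=> q Hq; apply: (proj2 Hp); apply: hpath_mono Hq.
  right.
  have [z Hzp HzH] : exists2 z, z \in p & z \notin H.1.
    by apply/allPn.
  have HzI : z \in I.
    case: p Hp Hzp Hall => [|x q] [Hp _] // Hzp _.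
    move: Hp => /and3P [_ _ /allP /(_ z Hzp)]; rewrite HV'.
    by rewrite (negbTE HzH).
  pose k := index z I.
  have Hk : k < n by rewrite /k /n index_mem.
  have Hzk : nth x0 I k = z by rewrite /k nth_index.
  have back : forall k, k < n -> nth x0 I k \in p -> nth x0 I 0 \in p.
    elim=> [|k' IH] Hk' Hin //.
    apply: IH; first lia.
    rewrite -nwI; last lia.
    apply: (longest_pred Hp Hin (arcI k'.+1 Hk')); first by apply: wV''; lia.
    exact: predU.
  have H1 : nth x0 I 0 \in p by apply: (back k Hk); rewrite Hzk.
  have fwd : forall d k, k < n -> k + d = n.-1 -> nth x0 I k \in p -> xl \in p.
    elim=> [|d IH] k' Hk' Hd Hin.
      have E : k'.+2 = n.+1 by lia.
      rewrite -nwl -E.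
      apply: (longest_succ Hp Hin (arcI' k' Hk')); first by apply: wV''; lia.
      exact: succU.
    apply: (IH k'.+1); [lia|lia|].
    rewrite -nwI; last lia.
    apply: (longest_succ Hp Hin (arcI' k' Hk')); first by apply: wV''; lia.
    exact: succU.
  split => //.
    apply: (longest_pred Hp H1 (arcI 0 Hn0)); first exact: sub1.
    exact: predU.
  apply: (fwd n.-1 0 Hn0) => //.
split.
  move=> u v; rewrite HE' => /orP [/HwfH /andP [Hu Hv]|/Hzip [j Hj [-> ->]]].
    by rewrite (sub1 _ Hu) (sub1 _ Hv).
  by rewrite !wV'' //; lia.
case=> S' [Hsub Hind Hcov].
have indS' : forall a b, a \in S' -> b \in S' -> a != b -> ~~ hrel H' a b.
  move=> a b Ha Hb Hab; rewrite /hrel HE' negb_or; apply/andP; split.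
    exact: Hind.
  apply/negP => Hz; exact: noarcH Hz (subsetP Hsub _ Ha) (subsetP Hsub _ Hb).
case: (boolP ((x0 \in S') || (xl \in S'))) => Hc.
  exists S'; split.
  - by apply/subsetP => z /(subsetP Hsub) /sub1.
  - exact: indS'.
  - move=> p Hp; case: (key p Hp) => [/Hcov //|[h0 _ hl]].
    by case/orP: Hc => Hc; [exists x0 | exists xl].
move/norP: Hc => [Hx0S HxlS].
exists (nth x0 I 0 |: S'); split.
- rewrite subUset sub1set IV' ?mem_nth //=.
  by apply/subsetP => z /(subsetP Hsub) /sub1.
- move=> a b; rewrite !in_setU1 => /orP [/eqP ->|Ha] /orP [/eqP ->|Hb] Hab.
  + by rewrite eqxx in Hab.
  + apply/negP => /(succU 0 Hn0 b) Hb2; subst b.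
    case: (ltnP 1 n) => Hn1.
      by move: (HI _ (mem_nth x0 Hn1)); rewrite -nwI // (subsetP Hsub _ Hb).
    have E : 2 = n.+1 by lia.
    by move: Hb; rewrite E nwl (negbTE HxlS).
  + apply/negP => /(predU 0 Hn0 a) Ha2; subst a.
    by rewrite Ha in Hx0S.
  + exact: indS'.
- move=> p Hp; case: (key p Hp) => [/Hcov [x Hx HxS]|[_ h1 _]].
    by exists x => //; rewrite in_setU1 HxS orbT.
  by exists (nth x0 I 0) => //; rewrite in_setU1 eqxx.
Qed.

Lemma in_zip_pair {T : eqType} (s t : seq T) u v :
  (u, v) \in zip s t -> (u \in s) && (v \in t).
Proof.
elim: s t => [|a s IH] [|b t] //=; rewrite in_cons => /orP [/eqP [-> ->]|/IH /andP [h1 h2]].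
  by rewrite !in_cons !eqxx.
by rewrite !in_cons h1 h2 !orbT.
Qed.

Lemma step_path {V : finType} (A : rel V) (H : subg V) p :
  wf H -> is_ear A H (PathEar p) -> 2 <= ear_len (PathEar p) ->
  wf (add_ear H (PathEar p)) /\ (Good H -> Good (add_ear H (PathEar p))).
Proof.
move=> Hwf; case: p => [|x q] //= [Hdp Hq0 Hx Hl Hint] Hlen.
move: Hq0 Hl Hint Hdp Hlen; case/lastP: q => [|I xl] // _.
rewrite last_rcons belast_rcons /= => Hl Hint Hdp Hlen.
apply: (ear_step (x0 := x) (xl := xl) (I := I)) => //.
- move: Hdp => /andP [_] /= /andP [_]; rewrite rcons_uniq => /andP [_ ->] //.
- by move: Hlen; rewrite /path_len /= size_rcons; case: (I).
- move=> z; rewrite /add_ear /= in_setU in_set in_cons mem_rcons in_cons.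
  case Hz: (z \in H.1) => //=.
  have -> : (z == x) = false by apply/eqP => E; rewrite E Hx in Hz.
  have -> : (z == xl) = false by apply/eqP => E; rewrite E Hl in Hz.
  by [].
- by move=> a; rewrite /add_ear /= in_setU in_set.
Qed.

Lemma step_cycle {V : finType} (A : rel V) (H : subg V) c :
  wf H -> is_ear A H (CycleEar c) ->
  wf (add_ear H (CycleEar c)) /\ (Good H -> Good (add_ear H (CycleEar c))).
Proof.
move=> Hwf [/and3P [Hsz Huc _] Hcard].
have [h Hh] : exists h, [set x in c] :&: H.1 = [set h] by apply/cards1P; rewrite Hcard.
have : h \in [set x in c] :&: H.1 by rewrite Hh set11.
rewrite in_setI in_set => /andP [Hhc HhH].
have only : forall z, z \in c -> z \in H.1 -> z = h.
  by move=> z Hz HzH; apply/set1P; rewrite -Hh in_setI in_set Hz HzH.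
have Hrot := rot_index Hhc.
move: Hrot; set k := index h c; set r := drop k.+1 c ++ take k c => Hrot.
have memc : forall z, (z \in c) = (z == h) || (z \in r).
  by move=> z; rewrite -(mem_rot k) Hrot in_cons.
have Hur : uniq (h :: r) by rewrite -Hrot rot_uniq.
have Hszr : size (h :: r) = size c by rewrite -Hrot size_rot.
apply: (ear_step (x0 := h) (xl := h) (I := r)) => //.
- move=> z Hz; apply/negP => HzH.
  have Hzc : z \in c by rewrite memc Hz orbT.
  move: Hur => /= /andP [Hhr _].
  by rewrite -(only z Hzc HzH) Hz in Hhr.
- by case/andP: Hur.
- by move: Hsz; rewrite -Hszr; case: (r).
- move=> z; rewrite /add_ear /= in_setU in_set memc.
  case Hz: (z \in H.1) => //=.
  have -> : (z == h) = false by apply/eqP => E; rewrite E HhH in Hz.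
  by [].
- move=> a; rewrite /add_ear /= in_setU in_set /cycle_arcs.
  congr (_ || _).
  rewrite -(mem_rot k) -zip_rot' ?size_rot // rot_rot Hrot rot1_cons.
  by rewrite -rcons_cons zip_rcons_l // size_rcons.
Qed.

Lemma base_good {V : finType} (A : rel V) c :
  dcycle A c -> wf (cycle_sub c) /\ Good (cycle_sub c).
Proof.
case/and3P => Hsz Hu _.
split.
  move=> u v; rewrite /cycle_sub /= !in_set /cycle_arcs => /in_zip_pair /andP [-> ].
  by rewrite mem_rot.
case: c Hsz Hu => [|x q] // Hsz Hu.
exists [set x]; split.
- by rewrite sub1set /= in_set mem_head.
- by move=> a b /set1P -> /set1P ->; rewrite eqxx.
- move=> p [Hp Hmax].
  have Hc : hpath (cycle_sub (x :: q)) (x :: q).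
    apply/and3P; split => //.
      apply: sub_path (path_zip_self x q) => u v /= Huv.
      by rewrite /hrel /= in_set /cycle_arcs rot1_cons -cats1 zip_catr_sub.
    by apply/allP => z Hz; rewrite /= in_set.
  have Hl := Hmax _ Hc.
  case: p Hp Hl Hmax => [|y p'] // Hp Hl _.
  move: Hp => /and3P [_ Hup /allP Hall].
  have Hsub : {subset y :: p' <= x :: q} by move=> z /Hall; rewrite /= in_set.
  have [_ Heq] := uniq_min_size Hup Hsub Hl.
  by exists x; rewrite ?Heq ?mem_head ?in_set1.
Qed.

Lemma main_ind {V : finType} (A : rel V) i : 2 <= i ->
  forall es H, ear_seq A i H es -> wf H -> Good H -> Good (full A).
Proof.
move=> Hi; elim=> [|e es IH] H /=; first by move=> -> _.
case=> Hear Hlen _ Hseq Hwf HG.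
have [Hwf' HG'] : wf (add_ear H e) /\ (Good H -> Good (add_ear H e)).
  case: e Hear Hlen Hseq => [p|c] Hear Hlen _.
    by apply: (step_path (A := A)) => //; exact: leq_trans Hi Hlen.
  exact: (step_cycle (A := A)).
exact: IH Hseq Hwf' (HG' HG).
Qed.

Lemma hpath_full {V : finType} (A : rel V) p : hpath (full A) p = dpath A p.
Proof.
case: p => [|x q] //=.
have -> : path (hrel (full A)) x q = path A x q.
  by apply: eq_path => u v; rewrite /hrel /= in_set.
have -> : all (fun z => z \in (full A).1) q by apply/allP => z _; rewrite in_setT.
by rewrite in_setT !andbT.
Qed.

Theorem mainTheorem2 (i : nat) (V : finType) (A : rel V) :
  2 <= i ->
  irreflexive A ->
  strong A ->
  LE A i ->
  exists S : {set V},
    independent A S /\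
    forall p : seq V, longest_path A p -> exists2 x, x \in p & x \in S.
Proof.
move=> Hi _ _ [c0 [es [Hc0 _ Hseq]]].
have [Hwf0 HG0] := base_good Hc0.
have [S [_ Hind Hcov]] := main_ind Hi Hseq Hwf0 HG0.
exists S; split.
- move=> x y Hx Hy Hxy; move: (Hind x y Hx Hy Hxy).
  by rewrite /hrel /full /= in_set.
- move=> p [Hp Hmax]; apply: Hcov; split; first by rewrite hpath_full.
  by move=> q; rewrite hpath_full; apply: Hmax.
Qed.
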